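(* Let $G=\mathrm{srg}(n,k,\lambda,\mu)$ be a strongly regular graph with $\mu\ge1$. If $2k+(n-1)(\lambda-\mu)\neq0$, then $\mathrm{QEC}(G)$ is a non-negative integer.
   Context: A graph $G=(V,E)$ is finite and simple. It is strongly regular with parameters $\mathrm{srg}(n,k,\lambda,\mu)$ if $|V|=n$, every vertex has exactly $k$ neighbours, every two adjacent vertices have exactly $\lambda$ common neighbours, and every two distinct non-adjacent vertices have exactly $\mu$ common neighbours. The hypothesis $\mu\ge1$ means in particular that there exist distinct non-adjacent vertices (so $G$ is not complete) and that $G$ is connected. For a connected graph $G=(V,E)$ with $|V|\ge2$, let $D=[d(x,y)]_{x,y\in V}$ be its distance matrix ($d$ the graph distance), and define the quadratic embedding constant \[ \mathrm{QEC}(G)=\max\{\langle f,Df\rangle : f\in\mathbb{R}^V,\ \langle f,f\rangle=1,\ \langle \mathbf{1},f\rangle=0\}, \] where $\mathbf 1$ is the all-ones vector and $\langle\cdot,\cdot\rangle$ the standard inner product. *)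

(* Defs.v *)
From HB Require Import structures.
From mathcomp Require Import all_boot all_order all_algebra.
From mathcomp Require Import all_classical all_reals.
Set Implicit Arguments. Unset Strict Implicit. Unset Printing Implicit Defensive.
Import Order.TTheory GRing.Theory Num.Theory.
Local Open Scope ring_scope.
Local Open Scope classical_set_scope.

Definition simple_graph (T : finType) (e : rel T) : Prop :=
  (forall x y, e x y = e y x) /\ (forall x, ~~ e x x).

Fixpoint reach (T : finType) (e : rel T) (k : nat) (x y : T) : bool :=
  match k with
  | 0 => x == y
  | k'.+1 => reach e k' x y || [exists z, reach e k' x z && e z y]
  end.

(* graph distance: least k with a walk of length <= k from x to y
   (for a connected graph on T, the distance is < #|T|, so the search
   over 0..#|T|-1 finds it) *)
Definition gdist (T : finType) (e : rel T) (x y : T) : nat :=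
  find (fun k => reach e k x y) (iota 0 #|T|).

Definition strongly_regular (T : finType) (e : rel T) (n k lam mu : nat) : Prop :=
  simple_graph e /\ #|T| = n /\
  (forall x, #|[set y | e x y]| = k) /\
  (forall x y, x != y -> e x y -> #|[set z | e x z && e y z]| = lam) /\
  (forall x y, x != y -> ~~ e x y -> #|[set z | e x z && e y z]| = mu).

Definition distQ (R : realType) (T : finType) (e : rel T) (f : T -> R) : R :=
  \sum_(x : T) \sum_(y : T) (gdist e x y)%:R * f x * f y.

Definition QEC (R : realType) (T : finType) (e : rel T) : R :=
  sup [set q : R | exists f : T -> R,
         \sum_(x : T) f x * f x = 1 /\ \sum_(x : T) f x = 0 /\ q = distQ e f].

(* Main.v *)
Require Import Defs.
From HB Require Import structures.
From mathcomp Require Import all_boot all_order all_algebra.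
From mathcomp Require Import all_classical all_reals.
From mathcomp Require Import zify ring lra.
Import Order.TTheory GRing.Theory Num.Theory.
Local Open Scope ring_scope.

Lemma tr_idem (F : fieldType) m (E : 'M[F]_m) : E *m E = E -> \tr E = (\rank E)%:R.
Proof.
move=> HE.
move: (col_base E) (row_base E) (col_base_full E) (row_base_free E) (mulmx_base E).
move=> C B HC HB EE.
have h1 : B *m C *m B = 1%:M *m B.
  apply: (row_full_inj HC).
  by rewrite mul1mx !mulmxA EE -mulmxA EE HE.
have h2 : B *m C = 1%:M := row_free_inj HB h1.
by rewrite -[in LHS]EE mxtrace_mulC h2 mxtrace1.
Qed.

Lemma sum_ev (R : nmodType) (T : finType) (F : T -> R) :
  \sum_(i < #|T|) F (enum_val i) = \sum_x F x.
Proof. by rewrite (big_enum_val (A := T)). Qed.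

Lemma alg (R : realType) (a d k lam mu N s D : R) : D != 0 -> N != 0 -> mu != 0 ->
  lam - mu = 2 * s + D -> k - mu = - ((s + D) * s) ->
  k * k = k + lam * k + mu * (N - 1 - k) ->
  D^-2 * ((k * d + lam * a + mu * (1 - d - a)) + (- s) * a + (- ((k - s) / N)) * k
    + (- s) * a + s ^+ 2 * d + (s * ((k - s) / N)) * 1 + (- ((k - s) / N)) * k
    + (s * ((k - s) / N)) * 1 + ((k - s) / N) ^+ 2 * N)
  = (a - s * d - (k - s) / N) / D.
Proof.
move=> D0 N0 m0 hl hk hf.
have El : lam = mu + 2 * s + D by lra.
have Em : mu = k + (s + D) * s by lra.
rewrite El in hf *.
have EN : N = (k * k - k - (mu + 2 * s + D) * k + mu + mu * k) / mu.
  apply: (mulfI m0); rewrite mulrCA mulfV // mulr1; lra.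
have E0 : (k * k - k - (mu + 2 * s + D) * k + mu + mu * k) != 0.
  by apply: contraNneq N0 => E; rewrite EN E mul0r.
rewrite EN; move: E0 m0; rewrite Em => E0 m0.
field.
by rewrite D0 m0 E0.
Qed.

Lemma parity (d lam mu k : nat) : (lam.+2 <= k)%N -> (mu <= k)%N ->
  (d%:Z) ^+ 2 = (lam%:Z - mu%:Z) ^+ 2 + 4 * (k%:Z - mu%:Z) ->
  exists t : nat, d%:Z - (lam%:Z - mu%:Z) = 2 * t%:Z + 4.
Proof.
move=> h1 h2 E.
have hL : lam%:Z <= k%:Z - 2 by lia.
set L := lam%:Z - mu%:Z in E *.
set tt := d%:Z - L.
have E2 : tt * (tt + 2 * L) = 4 * (k%:Z - mu%:Z).
  have -> : tt * (tt + 2 * L) = d%:Z ^+ 2 - L ^+ 2 by rewrite /tt; ring.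
  by rewrite E addrAC subrr add0r.
have pos : 0 < tt.
  rewrite ltNge; apply/negP => H.
  have HL : 0 <= L by rewrite /tt in H; lia.
  have Hk : 2 <= k%:Z - mu%:Z by rewrite /L in HL; lia.
  have : tt * (tt + 2 * L) <= 0.
    apply: mulr_le0_ge0 => //; rewrite /tt; lia.
  lia.
have [q [hq|hq]] : exists q : int, tt = 2 * q \/ tt = 2 * q + 1.
  exists (tt %/ 2)%Z; have := divz_eq tt 2; have := modz_ge0 tt (isT : 2 != 0 :> int).
  have := ltz_mod tt (isT : 2 != 0 :> int); lia.
- have Y : q * (q + L) = k%:Z - mu%:Z.
    have : 4 * (q * (q + L)) = 4 * (k%:Z - mu%:Z) by rewrite -E2 hq; ring.
    set Z := q * (q + L); lia.
  have q1 : 1 <= q by lia.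
  have q2 : q != 1.
    apply/eqP => q1'; rewrite q1' /L in Y; lia.
  exists `|q - 2|%N; rewrite hq; lia.
- exfalso.
  have : 2 * ((2 * q * q + 2 * q + 2 * q * L + L)) + 1 = 4 * (k%:Z - mu%:Z).
    by rewrite -E2 hq; ring.
  set Z := 2 * q * q + 2 * q + 2 * q * L + L; lia.
Qed.

Lemma natzR (R : numDomainType) (n : nat) : ((n%:Z)%:~R : R) = n%:R.
Proof. by rewrite -pmulrn. Qed.

Lemma nat_sqrt (R : realType) (D : R) (p q dn : nat) : (0 < q)%N -> 0 <= D ->
  D * q%:R = p%:R -> D ^+ 2 = dn%:R -> exists d : nat, D = d%:R.
Proof.
move=> q0 D0 Hp HD.
have E : (dn * q ^ 2)%N = (p ^ 2)%N.
  apply/eqP; rewrite -(eqr_nat R) natrM !natrX -Hp -HD exprMn.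
  by [].
have : (q ^ 2 %| p ^ 2)%N by rewrite -E dvdn_mull.
rewrite dvdn_pexp2r // => /dvdnP [d Hd].
exists d; have qn0 : (q%:R : R) != 0 by rewrite pnatr_eq0 -lt0n.
by apply: (mulIf qn0); rewrite Hp Hd natrM.
Qed.

Section SRG.
Variables (R : realType) (T : finType) (e : rel T) (k lam mu : nat).
Hypothesis Hsym : forall x y, e x y = e y x.
Hypothesis Hirr : forall x, ~~ e x x.
Hypothesis Hk : forall x, #|[set y | e x y]| = k.
Hypothesis Hlam : forall x y, x != y -> e x y -> #|[set z | e x z && e y z]| = lam.
Hypothesis Hmu : forall x y, x != y -> ~~ e x y -> #|[set z | e x z && e y z]| = mu.

Definition a (x y : T) : R := (e x y)%:R.
Definition dl (x y : T) : R := (x == y)%:R.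

Lemma sum_card (P : pred T) : \sum_y ((P y)%:R : R) = #|[set y | P y]|%:R.
Proof.
rewrite (eq_bigr (fun y => if P y then 1 else 0)); last by move=> y _; case: (P y).
by rewrite -big_mkcond /= sumr_const cardsE.
Qed.

Lemma sum_a x : \sum_y a x y = k%:R.
Proof. by rewrite /a sum_card Hk. Qed.

Lemma sum_a' y : \sum_x a x y = k%:R.
Proof. by rewrite -(sum_a y); apply: eq_bigr => x _; rewrite /a Hsym. Qed.

Lemma a_sym x y : a x y = a y x.
Proof. by rewrite /a Hsym. Qed.

Lemma a_diag x : a x x = 0.
Proof. by rewrite /a (negbTE (Hirr x)). Qed.

Lemma sum_aa x y : \sum_z a x z * a z y =
  k%:R * dl x y + lam%:R * a x y + mu%:R * (1 - dl x y - a x y).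
Proof.
rewrite (eq_bigr (fun z => ((e x z && e y z) : bool)%:R)); last first.
  by move=> z _; rewrite /a (Hsym z y) -natrM mulnb.
rewrite sum_card /dl /a.
have [->|nxy] := eqVneq x y.
  rewrite (negbTE (Hirr y)) /=.
  have -> : [set z | e y z && e y z] = [set z | e y z].
    by apply/setP => z; rewrite !inE andbb.
  rewrite Hk; ring.
case exy: (e x y).
  by rewrite Hlam //=; ring.
by rewrite Hmu ?exy //=; ring.
Qed.

Lemma sum_dl (F : T -> R) x : \sum_y dl x y * F y = F x.
Proof.
rewrite (bigD1 x) //= /dl eqxx mul1r big1 ?addr0 //.
by move=> y /negbTE; rewrite eq_sym => ->; rewrite mul0r.
Qed.

Lemma sum_dl' (F : T -> R) x : \sum_y F y * dl y x = F x.
Proof.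
rewrite -(sum_dl F x); apply: eq_bigr => y _; by rewrite mulrC /dl eq_sym.
Qed.

Definition Af (f : T -> R) (x : T) : R := \sum_y a x y * f y.
Definition ip (f g : T -> R) : R := \sum_x f x * g x.

Lemma lin3 (u v w : T -> R) (c1 c2 c3 : R) :
  \sum_x (c1 * u x + c2 * v x + c3 * w x) =
  c1 * \sum_x u x + c2 * \sum_x v x + c3 * \sum_x w x.
Proof. by rewrite !big_split /= !mulr_sumr. Qed.

Lemma sum_Af f : \sum_x Af f x = k%:R * \sum_x f x.
Proof.
rewrite /Af exchange_big mulr_sumr; apply: eq_bigr => y _.
by rewrite -mulr_suml sum_a'.
Qed.

Lemma ip_sym f g : ip f (Af g) = ip (Af f) g.
Proof.
rewrite /ip /Af.
under eq_bigr do rewrite mulr_sumr.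
rewrite exchange_big; apply: eq_bigr => y _.
rewrite mulr_suml; apply: eq_bigr => x _.
by rewrite a_sym; ring.
Qed.

Lemma AAf f : \sum_x f x = 0 -> forall x,
  Af (Af f) x = (k%:R - mu%:R) * f x + (lam%:R - mu%:R) * Af f x.
Proof.
move=> Hf x; rewrite /Af.
under eq_bigr do rewrite mulr_sumr.
rewrite exchange_big /=.
under eq_bigr do under eq_bigr do rewrite mulrA.
under eq_bigr do rewrite -mulr_suml sum_aa.
rewrite (eq_bigr (fun z => k%:R * (dl x z * f z) + lam%:R * (a x z * f z)
    + mu%:R * (f z - dl x z * f z - a x z * f z))); last by move=> z _; ring.
rewrite lin3 !sumrB sum_dl Hf; ring.
Qed.

Lemma ex1 x y : [exists z, (x == z) && e z y] = e x y.
Proof.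
apply/existsP/idP.
  by case=> z /andP [/eqP -> ->].
by move=> h; exists x; rewrite eqxx h.
Qed.

Hypothesis Hmu1 : (1 <= mu)%N.
Variables x0 y0 : T.
Hypothesis Hx0y0 : x0 != y0.
Hypothesis Hnxy : ~~ e x0 y0.

Lemma common x y : x != y -> ~~ e x y -> exists z, e x z && e y z.
Proof.
move=> nxy nexy.
have [z] : exists z, z \in [set z | e x z && e y z].
  by apply/set0Pn; rewrite -card_gt0 (Hmu x y nxy nexy).
by rewrite inE => h; exists z.
Qed.

Lemma card3 : (3 <= #|T|)%N.
Proof.
have [z /andP [h1 h2]] := common x0 y0 Hx0y0 Hnxy.
have u : uniq [:: x0; y0; z].
  rewrite /= !inE negb_or Hx0y0 /= andbT.
  apply/andP; split; apply/negP => /eqP E.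
  - by move: h1; rewrite -E (negbTE (Hirr x0)).
  - by move: h2; rewrite -E (negbTE (Hirr y0)).
have := uniq_leq_size u (fun w _ => mem_enum T w).
by rewrite cardE.
Qed.

Lemma nbT : ((true : nat)%:R : R) = 1. Proof. by []. Qed.
Lemma nbF : ((false : nat)%:R : R) = 0. Proof. by []. Qed.

Lemma gdist_val x y : (gdist e x y)%:R = 2 - 2 * dl x y - a x y :> R.
Proof.
have HN : #|T| = (#|T| - 3).+3 by have := card3; lia.
rewrite /gdist HN /= !ex1 /dl /a.
have [->|nxy] := eqVneq x y; first by rewrite /= (negbTE (Hirr y)) nbF; ring.
case exy: (e x y) => /=; first by rewrite nbT nbF; ring.
have [z hz] := common x y nxy (negbT exy).
have -> : [exists z0, ((x == z0) || [exists z1, (x == z1) && e z1 z0]) && e z0 y].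
  by apply/existsP; exists z; rewrite ex1 (Hsym z y); move: hz => /andP [-> ->]; rewrite orbT.
by rewrite /= nbF; ring.
Qed.

Lemma distQ_val f : \sum_x f x = 0 ->
  distQ e f = - 2 * ip f f - ip f (Af f).
Proof.
move=> Hf; rewrite /distQ /ip.
rewrite (eq_bigr (fun x => 2 * (f x * \sum_y f y) + (-2) * (f x * f x)
   + (-1) * (f x * Af f x))); last first.
  move=> x _; rewrite /Af !mulr_sumr.
  rewrite (eq_bigr (fun y => 2 * (f x * f y) + (-2) * (f x * (dl x y * f y))
     + (-1) * (f x * (a x y * f y)))); last by move=> y _; rewrite gdist_val; ring.
  rewrite lin3 -!mulr_sumr sum_dl; ring.
rewrite lin3 -mulr_suml Hf mul0r mulr0 add0r; ring.
Qed.

Lemma mu_le_k : (mu <= k)%N.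
Proof.
rewrite -(Hmu x0 y0 Hx0y0 Hnxy) -(Hk x0).
apply: subset_leq_card; apply/fintype.subsetP => z; rewrite !inE.
by move=> /andP [-> _].
Qed.

Lemma lam2k : (lam.+2 <= k)%N.
Proof.
have [z /andP [h1 h2]] := common x0 y0 Hx0y0 Hnxy.
set N := [set v | e z v].
have hx : x0 \in N by rewrite inE Hsym.
have hzx : z != x0.
  by apply/eqP => E; move: h1; rewrite E (negbTE (Hirr x0)).
have ezx : e z x0 by rewrite Hsym.
have Hl := Hlam z x0 hzx ezx.
have sub : [set v | e z v && e x0 v] \subset N :\ x0.
  apply/fintype.subsetP => v; rewrite !inE => /andP [h3 h4]; rewrite h3 andbT.
  by apply/eqP => E; move: h4; rewrite E (negbTE (Hirr x0)).
have cN : #|N :\ x0| = k.-1.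
  by have := cardsD1 x0 N; rewrite hx (Hk z) /=; lia.
have le := subset_leq_card sub.
rewrite Hl cN in le.
have k1 : (1 <= k)%N by have := cardsD1 x0 N; rewrite hx (Hk z) /=; lia.
case: (eqVneq lam k.-1) => E; last by lia.
exfalso.
have H := subset_cardP (etrans Hl (etrans E (esym cN))) sub.
have : y0 \in [set v | e z v && e x0 v].
  by rewrite H !inE eq_sym Hx0y0 (Hsym z y0) h2.
rewrite inE => /andP [_ h].
by move: Hnxy; rewrite h.
Qed.

Lemma lin2 (u v : T -> R) (c1 c2 : R) :
  \sum_x (c1 * u x + c2 * v x) = c1 * \sum_x u x + c2 * \sum_x v x.
Proof. by rewrite big_split /= !mulr_sumr. Qed.

Lemma Af_lin (u v : T -> R) (c : R) x :
  Af (fun y => u y - c * v y) x = Af u x - c * Af v x.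
Proof.
rewrite /Af (eq_bigr (fun y => 1 * (a x y * u y) + (- c) * (a x y * v y))).
  by rewrite lin2; ring.
by move=> y _; ring.
Qed.

Definition L : R := lam%:R - mu%:R.
Definition Dl : R := L ^+ 2 + 4 * (k%:R - mu%:R).
Definition D : R := Num.sqrt Dl.
Definition s : R := (L - D) / 2.

Lemma Dl_gt0 : 0 < Dl.
Proof.
have h1 := lam2k; have h2 := mu_le_k.
rewrite /Dl /L.
case: (ltnP mu k) => h3.
  have : (mu%:R : R) + 1 <= k%:R by rewrite natr1 ler_nat.
  have : 0 <= (lam%:R - mu%:R : R) ^+ 2 by apply: sqr_ge0.
  lra.
have E : k = mu by lia.
have : ((lam + 2)%:R : R) <= k%:R by rewrite ler_nat addn2.
rewrite natrD.
rewrite E => H; nra.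
Qed.

Lemma D_gt0 : 0 < D.
Proof. by rewrite /D sqrtr_gt0 Dl_gt0. Qed.

Lemma D2 : D ^+ 2 = Dl.
Proof. by rewrite /D sqr_sqrtr // ltW // Dl_gt0. Qed.

Lemma hL : lam%:R - mu%:R = 2 * s + D.
Proof. by rewrite /s -/L; field. Qed.

Lemma hk : k%:R - mu%:R = - ((s + D) * s).
Proof.
have := D2; rewrite /Dl => E.
have : (k%:R - mu%:R) * 4 = D ^+ 2 - L ^+ 2 by rewrite E; ring.
rewrite /s => H.
have -> : k%:R - mu%:R = (D ^+ 2 - L ^+ 2) / 4 by rewrite -H; field.
by field.
Qed.

Lemma quad_ge f : \sum_x f x = 0 -> s * ip f f <= ip f (Af f).
Proof.
move=> Hf.
set g := fun x => Af f x - s * f x.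
have Hg : forall x, Af g x - s * g x = D * g x.
  move=> x; rewrite /g Af_lin AAf // hL hk; ring.
have E1 : ip g g = D * (ip f (Af f) - s * ip f f).
  have -> : ip g g = ip g (Af f) - s * ip g f.
    rewrite /ip (eq_bigr (fun x => 1 * (g x * Af f x) + (- s) * (g x * f x))).
      by rewrite lin2; ring.
    by move=> x _; rewrite {1}/g; ring.
  rewrite ip_sym.
  have -> : ip (Af g) f - s * ip g f = D * ip g f.
    have -> : ip (Af g) f - s * ip g f =
      \sum_x (1 * (Af g x * f x) + (- s) * (g x * f x)) by rewrite lin2 /ip; ring.
    rewrite /ip mulr_sumr; apply: eq_bigr => x _.
    by rewrite [D * _]mulrA -Hg; ring.
  congr (D * _).
  rewrite /ip (eq_bigr (fun x => 1 * (f x * Af f x) + (- s) * (f x * f x))).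
    by rewrite lin2; ring.
  by move=> x _; rewrite /g; ring.
have : 0 <= ip g g by rewrite /ip; apply: sumr_ge0 => x _; rewrite -expr2 sqr_ge0.
rewrite E1 pmulr_rge0 ?D_gt0 //; lra.
Qed.


Lemma sum_dl1 u : \sum_z dl z u = 1.
Proof. by rewrite -(sum_dl' (fun _ => 1) u); apply: eq_bigr => z _; ring. Qed.

Lemma Af_g u v x : Af (fun z => dl z u - dl z v) x = a x u - a x v.
Proof.
rewrite /Af (eq_bigr (fun z => 1 * (a x z * dl z u) + (-1) * (a x z * dl z v))).
  by rewrite lin2 !sum_dl'; ring.
by move=> z _; ring.
Qed.

Lemma exists_g : exists g : T -> R, \sum_x g x = 0 /\
  exists x, Af g x - (s + D) * g x != 0.
Proof.
have [z /andP [h1 _]] := common x0 y0 Hx0y0 Hnxy.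
have hzx : x0 != z by apply/eqP => E; move: h1; rewrite -E (negbTE (Hirr x0)).
have [r0|rn0] := eqVneq (s + D) 0.
  exists (fun y => dl y x0 - dl y z); split.
    by rewrite sumrB !sum_dl1 subrr.
  exists x0; rewrite Af_g r0 /a /dl h1 (negbTE (Hirr x0)) eqxx (negbTE hzx) nbT nbF.
  by rewrite mul0r subr0 sub0r oppr_eq0 oner_eq0.
exists (fun y => dl y x0 - dl y y0); split.
  by rewrite sumrB !sum_dl1 subrr.
exists x0; rewrite Af_g /a /dl (negbTE Hnxy) (negbTE (Hirr x0)) eqxx (negbTE Hx0y0) nbF nbT.
by rewrite subrr subr0 mulr1 sub0r oppr_eq0.
Qed.

Lemma exists_eig : exists f : T -> R, ip f f = 1 /\ \sum_x f x = 0 /\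
  forall x, Af f x = s * f x.
Proof.
have [g [Hg [x Hx]]] := exists_g.
set h := fun y => Af g y - (s + D) * g y.
have Hh : \sum_y h y = 0.
  rewrite /h sumrB sum_Af -mulr_sumr Hg; ring.
have Heig : forall y, Af h y = s * h y.
  move=> y; rewrite /h Af_lin AAf // hL hk; ring.
have hpos : 0 < ip h h.
  rewrite /ip (bigD1 x) //=.
  have : 0 < h x * h x by rewrite lt_def mulf_neq0 //= -expr2 sqr_ge0.
  have : 0 <= \sum_(i | i != x) h i * h i.
    by apply: sumr_ge0 => i _; rewrite -expr2 sqr_ge0.
  lra.
set c := Num.sqrt (ip h h).
have c0 : 0 < c by rewrite /c sqrtr_gt0.
have c2 : c ^+ 2 = ip h h by rewrite /c sqr_sqrtr // ltW.
have cn0 : c != 0 by rewrite gt_eqF.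
exists (fun y => h y / c); split; [|split].
- rewrite /ip (eq_bigr (fun y => (h y * h y) * (c ^+ 2)^-1)); last first.
    by move=> y _; field.
  by rewrite -mulr_suml -/(ip h h) -c2 mulfV // expf_neq0.
- by rewrite -mulr_suml Hh mul0r.
- move=> y; rewrite /Af (eq_bigr (fun z => (a y z * h z) * c^-1)); last first.
    by move=> z _; rewrite mulrA.
  by rewrite -mulr_suml -/(Af h y) Heig mulrA.
Qed.

Lemma attain : exists f : T -> R, ip f f = 1 /\ \sum_x f x = 0 /\ distQ e f = - 2 - s.
Proof.
have [f [H1 [H2 H3]]] := exists_eig.
exists f; split => //; split => //.
rewrite distQ_val // H1 /ip (eq_bigr (fun x => s * (f x * f x))).
  by rewrite -mulr_sumr -/(ip f f) H1; ring.
by move=> x _; rewrite H3; ring.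
Qed.

Lemma upper f : ip f f = 1 -> \sum_x f x = 0 -> distQ e f <= - 2 - s.
Proof.
move=> H1 H2; rewrite distQ_val // H1.
have := quad_ge f H2; rewrite H1; lra.
Qed.



Definition NN : R := #|T|%:R.
Definition cc : R := (k%:R - s) / NN.
Definition e1 (x y : T) : R := (a x y - s * dl x y - cc) / D.

Lemma sum_dl1r x : \sum_z dl x z = 1.
Proof. by rewrite -(sum_dl (fun _ => 1) x); apply: eq_bigr => z _; ring. Qed.

Lemma F5 : k%:R * k%:R = k%:R + lam%:R * k%:R + mu%:R * (NN - 1 - k%:R) :> R.
Proof.
have := congr1 (fun F => \sum_(y : T) F y) (funext (sum_aa x0)) => /=.
rewrite exchange_big /=.
under eq_bigr do rewrite -mulr_sumr sum_a.
rewrite -mulr_suml sum_a => ->.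
rewrite (eq_bigr (fun y => k%:R * dl x0 y + lam%:R * a x0 y + mu%:R * (1 - dl x0 y - a x0 y))) //.
rewrite lin3 !sumrB sum_dl1r sum_a sumr_const /NN; ring.
Qed.

Lemma NN0 : NN != 0.
Proof. by rewrite /NN pnatr_eq0 -lt0n; have := card3; lia. Qed.

Lemma e1_idem x y : \sum_z e1 x z * e1 z y = e1 x y.
Proof.
have D0 : D != 0 by rewrite gt_eqF // D_gt0.
rewrite /e1 (eq_bigr (fun z => D^-2 * (1 * (a x z * a z y) + (-s) * (a x z * dl z y)
   + (-cc) * a x z + (-s) * (dl x z * a z y) + s^+2 * (dl x z * dl z y)
   + (s*cc) * dl x z + (-cc) * a z y + (s * cc) * dl z y + cc^+2 * 1))); last first.
  by move=> z _; field.
rewrite -mulr_sumr !big_split /= -!mulr_sumr sum_aa sum_dl' sum_a sum_dl sum_dl.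
rewrite sum_dl1r sum_a' sum_dl1 sumr_const mul1r.
apply: alg => //.
- exact: NN0.
- by rewrite pnatr_eq0 -lt0n.
- exact: hL.
- exact: hk.
- exact: F5.
Qed.


Definition Em : 'M[R]_#|T| := \matrix_(i, j) e1 (enum_val i) (enum_val j).

Lemma Em_idem : Em *m Em = Em.
Proof.
apply/matrixP => i j; rewrite !mxE.
under eq_bigr do rewrite !mxE.
by rewrite (@sum_ev _ _ (fun z => e1 (enum_val i) z * e1 z (enum_val j))) e1_idem.
Qed.

Lemma trace_rel : exists m : nat, m%:R * D = - NN * s - (k%:R - s).
Proof.
exists (\rank Em).
have D0 : D != 0 by rewrite gt_eqF // D_gt0.
rewrite -tr_idem ?Em_idem //.
rewrite /mxtrace.
under eq_bigr do rewrite mxE.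
rewrite (@sum_ev _ _ (fun z => e1 z z)) /e1.
rewrite (eq_bigr (fun _ => (- s - cc) / D)); last first.
  by move=> x _; rewrite a_diag /dl eqxx nbT; ring.
rewrite sumr_const -mulr_natl -/NN /cc.
have := NN0 => N0; field.
by rewrite D0 N0.
Qed.

Hypothesis Hne : 2 * k%:R + (NN - 1) * (lam%:R - mu%:R) != 0 :> R.

Lemma final_int : exists m : nat, - 2 - s = m%:R.
Proof.
have [m Hm] := trace_rel.
have D0 := D_gt0.
set Qz : int := 2 * m%:Z - #|T|%:Z + 1.
set Pz : int := - (2 * k%:Z + (#|T|%:Z - 1) * (lam%:Z - mu%:Z)).
have castQ : (Qz%:~R : R) = 2 * m%:R - NN + 1.
  by rewrite /Qz !(rmorphB, rmorphD, rmorphM, rmorph1, rmorphN) /= !natzR /NN; ring.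
have castP : (Pz%:~R : R) = - (2 * k%:R + (NN - 1) * (lam%:R - mu%:R)).
  by rewrite /Pz !(rmorphB, rmorphD, rmorphM, rmorph1, rmorphN) /= !natzR /NN; ring.
have HQ : D * Qz%:~R = Pz%:~R.
  rewrite castQ castP; move: Hm; rewrite /s /L => Hm; lra.
have Pz0 : Pz != 0.
  by rewrite -(intr_eq0 R) castP oppr_eq0.
have Qz0 : Qz != 0.
  by apply: contraNneq Pz0 => E0; rewrite -(intr_eq0 R) -HQ E0 mulr0.
have HQn : D * `|Qz|%:R = `|Pz|%:R.
  have := congr1 (fun x => `|x|) HQ.
  by rewrite /= normrM (ger0_norm (ltW D0)) -!intr_norm -!natr_absz.
set Dz : int := (lam%:Z - mu%:Z) ^+ 2 + 4 * (k%:Z - mu%:Z).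
have castD : (Dz%:~R : R) = Dl.
  by rewrite /Dz /Dl /L !(rmorphB, rmorphD, rmorphM, rmorph1, rmorphN, rmorphXn) /= !natzR; ring.
have Dz0 : 0 <= Dz by rewrite -(ler0z R) castD -D2 sqr_ge0.
have HD : D ^+ 2 = `|Dz|%:R by rewrite -natzR gez0_abs // castD D2.
have q0 : (0 < `|Qz|)%N by rewrite absz_gt0.
have [d Hd] := @nat_sqrt _ _ _ _ _ q0 (ltW D0) HQn HD.
have Hdz : (d%:Z) ^+ 2 = (lam%:Z - mu%:Z) ^+ 2 + 4 * (k%:Z - mu%:Z).
  apply/eqP; rewrite -(eqr_int R) rmorphXn /= natzR -Hd D2 -castD.
  by [].
have [t Ht] := @parity _ _ _ _ lam2k mu_le_k Hdz.
exists t.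
have := congr1 (fun x : int => (x%:~R : R)) Ht.
rewrite /= !(rmorphB, rmorphD, rmorphM, rmorph1, rmorphN) /= !natzR -Hd /s /L.
move=> H; lra.
Qed.

End SRG.

Lemma card_cl (T : finType) (P : pred T) : #|[set z | P z]%classic| = #|[set z | P z]|.
Proof.
apply: eq_card => z; rewrite inE /=; apply/idP/idP => h.
  by have := set_mem h.
by apply: mem_set.
Qed.

Theorem corollary5p3 (R : realType) (T : finType) (e : rel T)
    (n k lam mu : nat) :
  strongly_regular e n k lam mu ->
  (1 <= mu)%N ->
  (exists x y : T, x != y /\ ~~ e x y) ->
  2 * k%:R + (n%:R - 1) * (lam%:R - mu%:R) != (0 : R) ->
  exists m : nat, QEC R e = m%:R.
Proof.
move=> [[Hsym Hirr] [Hn [Hk0 [Hlam0 Hmu0]]]] Hmu1 [x0 [y0 [Hxy Hnexy]]] Hne.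
have Hk : forall x, #|[set y | e x y]| = k.
  by move=> x; have := Hk0 x; rewrite (@card_cl T (fun y => e x y)).
have Hlam : forall x y, x != y -> e x y -> #|[set z | e x z && e y z]| = lam.
  by move=> x y h1 h2; have := Hlam0 x y h1 h2; rewrite (@card_cl T (fun z => e x z && e y z)).
have Hmu : forall x y, x != y -> ~~ e x y -> #|[set z | e x z && e y z]| = mu.
  by move=> x y h1 h2; have := Hmu0 x y h1 h2; rewrite (@card_cl T (fun z => e x z && e y z)).
rewrite -Hn in Hne.
have [m Hm] := final_int R T e k lam mu Hsym Hirr Hk Hlam Hmu Hmu1 x0 y0 Hxy Hnexy Hne.
exists m; rewrite -Hm.
set S := [set q : R | exists f : T -> R,
         \sum_(x : T) f x * f x = 1 /\ \sum_(x : T) f x = 0 /\ q = distQ e f]%classic.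
have [f [H1 [H2 H3]]] := attain R T e k lam mu Hsym Hirr Hk Hlam Hmu Hmu1 x0 y0 Hxy Hnexy.
have inS : S (- 2 - s R k lam mu) by exists f; split => //; split.
have ub : ubound S (- 2 - s R k lam mu).
  move=> q [g [G1 [G2 ->]]].
  exact: (upper R T e k lam mu Hsym Hirr Hk Hlam Hmu Hmu1 x0 y0 Hxy Hnexy g G1 G2).
rewrite /QEC -/S.
apply/eqP; rewrite eq_le; apply/andP; split.
  by apply: ge_sup => //; exists (- 2 - s R k lam mu).
by apply: ub_le_sup => //; exists (- 2 - s R k lam mu).
Qed.
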